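(* Let $A$ be a real $2\times 2$ matrix and $B$ a real $1\times 2$ matrix, and let $\mathrm{NT}=\{\vec{x}\in\mathbb{R}^2 : BA^k\vec{x}>0 \text{ for all } k\in\mathbb{N}\}$. Then $\mathrm{NT}$ is one of the following: (1) the empty set; (2) a ray from the origin, i.e. a set $\{k\vec{v}: k>0\}$ for some nonzero $\vec{v}\in\mathbb{R}^2$; (3) a sector between two rays starting from the origin, i.e. a convex set with nonempty interior satisfying $k\,\mathrm{NT}\subseteq \mathrm{NT}$ for all $k>0$.
   Context: We consider the homogeneous simple linear loop ''while $(B\vec{x}>0)$ $\{\vec{x}:=A\vec{x}\}$'' with program variables $\vec{x}\in\mathbb{R}^2$. Its non-termination set $\mathrm{NT}$ is the set of inputs on which the loop never terminates, namely $\mathrm{NT}=\{\vec{x}\in\mathbb{R}^2 : BA^k\vec{x}>0 \text{ for all integers } k\ge 0\}$. It is known (and may be used) that $\mathrm{NT}$ is convex. *)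

(* Defs.v *)
From Stdlib Require Import Reals.
Open Scope R_scope.

(* Vectors in R^2 as pairs; a 2x2 matrix as its four entries
   A = [[a11 a12];[a21 a22]]; a 1x2 matrix B = [b1 b2]. *)
Definition vec2 := (R * R)%type.

Record mat22 := Mat22 { a11 : R; a12 : R; a21 : R; a22 : R }.
Record mat12 := Mat12 { b1 : R; b2 : R }.

Definition mulv (A : mat22) (x : vec2) : vec2 :=
  (a11 A * fst x + a12 A * snd x, a21 A * fst x + a22 A * snd x).

Definition mulB (B : mat12) (x : vec2) : R := b1 B * fst x + b2 B * snd x.

Definition powv (A : mat22) (k : nat) (x : vec2) : vec2 := Nat.iter k (mulv A) x.

Definition vscale (c : R) (x : vec2) : vec2 := (c * fst x, c * snd x).
Definition vadd (x y : vec2) : vec2 := (fst x + fst y, snd x + snd y).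
Definition vdist (x y : vec2) : R :=
  sqrt ((fst x - fst y) ^ 2 + (snd x - snd y) ^ 2).

Definition NT (A : mat22) (B : mat12) (x : vec2) : Prop :=
  forall k : nat, 0 < mulB B (powv A k x).

Definition is_convex (S : vec2 -> Prop) : Prop :=
  forall x y t, 0 <= t <= 1 -> S x -> S y -> S (vadd (vscale t x) (vscale (1 - t) y)).

Definition has_nonempty_interior (S : vec2 -> Prop) : Prop :=
  exists x eps, 0 < eps /\ forall y, vdist y x < eps -> S y.

Definition is_ray (S : vec2 -> Prop) : Prop :=
  exists v : vec2, v <> (0, 0) /\ forall x, S x <-> exists k, 0 < k /\ x = vscale k v.

(* Main.v *)
Require Import Defs.
From Stdlib Require Import Reals Lra Psatz Classical.
Open Scope R_scope.

Lemma powv_lin A k s t x y :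
  powv A k (vadd (vscale s x) (vscale t y)) =
  vadd (vscale s (powv A k x)) (vscale t (powv A k y)).
Proof.
  induction k as [|k IH]; [reflexivity|].
  unfold powv in *; simpl. rewrite IH.
  destruct (Nat.iter k (mulv A) x) as [p q]; destruct (Nat.iter k (mulv A) y) as [u w].
  unfold mulv, vadd, vscale; simpl; f_equal; ring.
Qed.

Lemma mulB_lin B s t x y :
  mulB B (vadd (vscale s x) (vscale t y)) = s * mulB B x + t * mulB B y.
Proof. unfold mulB, vadd, vscale; simpl; ring. Qed.

Lemma NT_comb A B s t x y : 0 <= s -> 0 <= t -> 0 < s + t ->
  NT A B x -> NT A B y -> NT A B (vadd (vscale s x) (vscale t y)).
Proof.
  intros Hs Ht Hst Hx Hy k. rewrite powv_lin, mulB_lin.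
  specialize (Hx k); specialize (Hy k).
  assert (0 <= s * mulB B (powv A k x)) by (apply Rmult_le_pos; lra).
  assert (0 <= t * mulB B (powv A k y)) by (apply Rmult_le_pos; lra).
  destruct (Rlt_or_le 0 s); [assert (0 < s * mulB B (powv A k x)) by (apply Rmult_lt_0_compat; lra); lra|].
  assert (0 < t * mulB B (powv A k y)) by (apply Rmult_lt_0_compat; lra); lra.
Qed.

Lemma NT_scale A B k x : 0 < k -> NT A B x -> NT A B (vscale k x).
Proof.
  intros Hk Hx.
  assert (E : vscale k x = vadd (vscale k x) (vscale 0 x)).
  { destruct x; unfold vadd, vscale; simpl; f_equal; ring. }
  rewrite E; apply NT_comb; auto; lra.
Qed.

Lemma NT_not0 A B : ~ NT A B (0,0).
Proof.
  intro H; specialize (H O); unfold mulB, powv in H; simpl in H; lra.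
Qed.

Theorem proposition2 (A : mat22) (B : mat12) :
  (forall x, ~ NT A B x)
  \/ is_ray (NT A B)
  \/ (is_convex (NT A B) /\ has_nonempty_interior (NT A B)
      /\ forall k x, 0 < k -> NT A B x -> NT A B (vscale k x)).
Proof.
  destruct (classic (exists x, NT A B x)) as [[x0 Hx0]|Hn].
  2:{ left; intros x Hx; apply Hn; eauto. }
  right.
  destruct (classic (exists x y, NT A B x /\ NT A B y /\
              fst x * snd y - snd x * fst y <> 0)) as [Hi|Hi].
  - right. split; [|split].
    + intros x y t Ht Hx Hy. apply NT_comb; auto; lra.
    +
      assert (Hp : exists x y, NT A B x /\ NT A B y /\
                fst x * snd y - snd x * fst y > 0).
      { destruct Hi as [x [y [Hx [Hy Hd]]]].
        destruct (Rlt_or_le 0 (fst x * snd y - snd x * fst y)).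
        - exists x, y; auto.
        - exists y, x; repeat split; auto; lra. }
      destruct Hp as [[x1 x2] [[y1 y2] [Hx [Hy Hd]]]]; simpl in Hd.
      set (d := x1 * y2 - x2 * y1) in *.
      set (M := 1 + Rabs x1 + Rabs x2 + Rabs y1 + Rabs y2).
      assert (HM : 1 <= M) by (unfold M; pose proof (Rabs_pos x1); pose proof (Rabs_pos x2);
                               pose proof (Rabs_pos y1); pose proof (Rabs_pos y2); lra).
      exists (x1 + y1, x2 + y2), (d / M).
      split; [apply Rdiv_lt_0_compat; lra|].
      intros [w1 w2] Hw. unfold vdist in Hw; simpl in Hw.
      set (e1 := w1 - (x1 + y1)) in *. set (e2 := w2 - (x2 + y2)) in *.
      assert (Hsq : forall a b, sqrt (a ^ 2 + b ^ 2) < d / M -> Rabs a < d / M).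
      { intros a b H. apply Rle_lt_trans with (2 := H).
        rewrite <- sqrt_Rsqr_abs. apply sqrt_le_1_alt.
        unfold Rsqr; nra. }
      assert (He1 : Rabs e1 < d / M) by (apply (Hsq e1 e2); exact Hw).
      assert (He2 : Rabs e2 < d / M).
      { apply (Hsq e2 e1). rewrite Rplus_comm; exact Hw. }
      assert (HdM : d / M * M = d) by (field; lra).
      assert (B1 : Rabs (e1 * y2) <= d / M * Rabs y2).
      { rewrite Rabs_mult. apply Rmult_le_compat_r; [apply Rabs_pos|lra]. }
      assert (B2 : Rabs (e2 * y1) <= d / M * Rabs y1).
      { rewrite Rabs_mult. apply Rmult_le_compat_r; [apply Rabs_pos|lra]. }
      assert (B3 : Rabs (x1 * e2) <= d / M * Rabs x1).
      { rewrite Rabs_mult, Rmult_comm. apply Rmult_le_compat_r; [apply Rabs_pos|lra]. }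
      assert (B4 : Rabs (x2 * e1) <= d / M * Rabs x2).
      { rewrite Rabs_mult, Rmult_comm. apply Rmult_le_compat_r; [apply Rabs_pos|lra]. }
      pose proof (Rle_abs (- (e1 * y2))) as C1. rewrite Rabs_Ropp in C1.
      pose proof (Rle_abs (e2 * y1)) as C2.
      pose proof (Rle_abs (- (x1 * e2))) as C3. rewrite Rabs_Ropp in C3.
      pose proof (Rle_abs (x2 * e1)) as C4.
      assert (HdMp : 0 < d / M) by (apply Rdiv_lt_0_compat; lra).
      assert (HMexp : d / M * M = d / M * 1 + d / M * Rabs x1 + d / M * Rabs x2
                       + d / M * Rabs y1 + d / M * Rabs y2) by (unfold M; ring).
      assert (0 <= d / M * Rabs x1) by (apply Rmult_le_pos; [lra|apply Rabs_pos]).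
      assert (0 <= d / M * Rabs x2) by (apply Rmult_le_pos; [lra|apply Rabs_pos]).
      assert (0 <= d / M * Rabs y1) by (apply Rmult_le_pos; [lra|apply Rabs_pos]).
      assert (0 <= d / M * Rabs y2) by (apply Rmult_le_pos; [lra|apply Rabs_pos]).
      set (s := (w1 * y2 - w2 * y1) / d).
      set (t := (x1 * w2 - x2 * w1) / d).
      assert (Hs : 0 < s).
      { unfold s; apply Rdiv_lt_0_compat; [|lra].
        replace (w1 * y2 - w2 * y1) with (d + e1 * y2 - e2 * y1) by (unfold d, e1, e2; ring).
        lra. }
      assert (Ht : 0 < t).
      { unfold t; apply Rdiv_lt_0_compat; [|lra].
        replace (x1 * w2 - x2 * w1) with (d + x1 * e2 - x2 * e1) by (unfold d, e1, e2; ring).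
        lra. }
      replace (w1, w2) with (vadd (vscale s (x1, x2)) (vscale t (y1, y2))).
      * apply NT_comb; auto; lra.
      * unfold vadd, vscale, s, t; simpl; unfold d in *; f_equal; field; lra.
    + intros; apply NT_scale; auto.
  - left. exists x0. split.
    + intro E; subst; apply (NT_not0 A B); auto.
    + intro y; split.
      * intro Hy.
        assert (Hd : fst x0 * snd y - snd x0 * fst y = 0).
        { apply NNPP; intro; apply Hi; exists x0, y; auto. }
        pose proof (Hx0 O) as P0. pose proof (Hy O) as P1.
        unfold powv, mulB in P0, P1; simpl in P0, P1.
        destruct x0 as [a b], y as [c e]; simpl in *.
        destruct (Req_dec a 0) as [Ha|Ha].
        -- subst a. assert (Hb : b <> 0) by (intro; subst; apply (NT_not0 A B); auto).
           assert (c = 0) by (apply (Rmult_eq_reg_l b); [lra|auto]). subst c.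
           exists (e / b). split.
           ++ assert (0 < b2 B * b) by lra. assert (0 < b2 B * e) by lra.
              assert (b2 B <> 0) by (intro Z; rewrite Z in *; lra).
              destruct (Rlt_or_le 0 b).
              ** apply Rdiv_lt_0_compat; nra.
              ** assert (b < 0) by lra. unfold Rdiv.
                 assert (/ b < 0) by (apply Rinv_lt_0_compat; lra). nra.
           ++ unfold vscale; simpl; f_equal; field; auto.
        -- exists (c / a).
           assert (Ee : e = b * c / a) by (field_simplify_eq; [lra|auto]).
           split.
           ++ assert (K : b1 B * c + b2 B * e = c / a * (b1 B * a + b2 B * b))
                by (rewrite Ee; field; auto).
              rewrite K in P1.
              destruct (Rlt_or_le 0 (c / a)); auto. nra.
           ++ unfold vscale; simpl; f_equal; [field; auto|rewrite Ee; field; auto].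
      * intros [k [Hk ->]]. apply NT_scale; auto.
Qed.
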